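(* Let $G$ be a mirror graph, let $xy$ be an edge of $G$, let $v\in V(G)$ and $v'=v^{\alpha_{xy}}$. Then there exists a path $P=v v_1 v_2\cdots v_{n-1}v'$ in $G$ from $v$ to $v'$ such that $\alpha_{xy}=\alpha_{vv_1}\alpha_{v_1v_2}\alpha_{v_2v_3}\cdots\alpha_{v_{n-1}v'}$.
   Context: A partition $\{E_1,\dots,E_k\}$ of the edges of a finite connected simple graph $G$ is a mirror partition if for every $i$ there is an automorphism $\alpha_i$ with (i) $\alpha_i(u)=v,\alpha_i(v)=u$ for every $uv\in E_i$ and (ii) $G-E_i$ has exactly two components, swapped isomorphically by $\alpha_i$; $G$ is a mirror graph if it has one. Mirror graphs are partial cubes whose mirror partition is the partition into $\Theta$-classes, where $ab\,\Theta\,xy$ iff $d(a,x)+d(b,y)\neq d(a,y)+d(b,x)$. For an edge $xy$ of a mirror graph, $\alpha_{xy}$ denotes the unique automorphism of $G$ that swaps the endpoints of every edge $\Theta$-equivalent to $xy$ (the mirror automorphism of that class); it is an involution and $\alpha_{xy}=\alpha_{x'y'}$ whenever $xy\,\Theta\,x'y'$. Automorphisms act on the right: $v^{\alpha\beta}=(v^{\alpha})^{\beta}$. *)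

(* Defs.v *)
From mathcomp Require Import all_boot all_fingroup.
Set Implicit Arguments. Unset Strict Implicit. Unset Printing Implicit Defensive.

Section MirrorDefs.
Variables (T : finType) (e : rel T).

Definition simple_graph := symmetric e /\ irreflexive e.
Definition connected_graph := forall u w : T, connect e u w.

Definition edges : {set {set T}} := [set E : {set T} | [exists u, exists w, e u w && (E == [set u; w])]].

Definition is_aut (a : {perm T}) := forall u w : T, e (a u) (a w) = e u w.

Definition erem (E : {set {set T}}) : rel T :=
  fun u w => e u w && ([set u; w] \notin E).

Definition comps (E : {set {set T}}) : {set {set T}} :=
  [set [set w | connect (erem E) u w] | u : T].

Definition mirror_partition (P : {set {set {set T}}}) :=
  partition P edges /\
  forall E, E \in P -> exists a : {perm T},
    [/\ is_aut a,
        (forall u w, [set u; w] \in E -> a u = w /\ a w = u),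
        #|comps E| = 2,
        (forall C, C \in comps E -> (a @: C) \in comps E /\ a @: C != C) &
        (forall u w, erem E u w = erem E (a u) (a w))].

Definition mirror_graph :=
  [/\ simple_graph, connected_graph & exists P, mirror_partition P].

(* shortest-path distance: least n with a walk of length n
   (only meaningful for connected graphs) *)
Definition walkn (n : nat) (x y : T) : bool :=
  [exists p : n.-tuple T, path e x p && (last x p == y)].
Definition dist (x y : T) : nat := find (fun n => walkn n x y) (iota 0 #|T|).

(* Djokovic-Winkler relation Theta on edges ab, xy *)
Definition Theta (a b x y : T) : bool :=
  [&& e a b, e x y & dist a x + dist b y != dist a y + dist b x].

Definition mirror_aut_of (x y : T) (a : {perm T}) : bool :=
  [forall u, forall w, Theta u w x y ==> ((a u == w) && (a w == u))] &&
  [forall u, forall w, e (a u) (a w) == e u w].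

(* alpha_xy: the (unique, for mirror graphs) automorphism swapping the
   endpoints of every edge Theta-equivalent to xy *)
Definition alpha (x y : T) : {perm T} :=
  odflt 1%g [pick a : {perm T} | mirror_aut_of x y a].

End MirrorDefs.

(* Main.v *)
Require Import Defs.
From mathcomp Require Import all_boot all_fingroup zify.
Set Implicit Arguments. Unset Strict Implicit. Unset Printing Implicit Defensive.

Lemma find_le_idx (P : pred nat) (s : seq nat) i :
  i < size s -> P (nth 0 s i) -> find P s <= i.
Proof.
move=> _ Pi; case: (leqP (find P s) i) => // lt.
by rewrite (before_find 0 lt) in Pi.
Qed.

Lemma dist_le (T : finType) (e : rel T) x p :
  path e x p -> dist e x (last x p) <= size p.
Proof.
move=> Hp; rewrite /dist.
case: (ltnP (size p) #|T|) => H.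
  apply: find_le_idx; first by rewrite size_iota.
  rewrite nth_iota // add0n; apply/existsP; exists (in_tuple p).
  by rewrite /= Hp eqxx.
apply: leq_trans H; by rewrite -{2}(size_iota 0 #|T|) find_size.
Qed.

Lemma dist_walk (T : finType) (e : rel T) x y :
  connected_graph e ->
  exists p, [/\ path e x p, last x p = y & size p = dist e x y].
Proof.
move=> conn; have /connectP[p0 Hp0 ->] := conn x y.
case: (shortenP Hp0) => p Hp U _.
have Hs : size p < #|T|.
  have := max_card (mem (x :: p)); rewrite (card_uniqP U) /=.
  by [].
have Hw : walkn e (size p) x (last x p).
  by apply/existsP; exists (in_tuple p); rewrite /= Hp eqxx.
have Hh : has (fun n => walkn e n x (last x p)) (iota 0 #|T|).
  by apply/hasP; exists (size p) => //; rewrite mem_iota.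
have := nth_find 0 Hh; rewrite -/(dist e x (last x p)).
have Hlt : dist e x (last x p) < #|T|.
  by move: Hh; rewrite has_find size_iota.
rewrite nth_iota // add0n => /existsP[t /andP[Ht /eqP Hl]].
by exists t; split => //; rewrite size_tuple.
Qed.

Lemma dist_triangle (T : finType) (e : rel T) x y z :
  connected_graph e -> dist e x z <= dist e x y + dist e y z.
Proof.
move=> conn; have [p [Hp Hl Hs]] := dist_walk x y conn.
have [q [Hq Hl' Hs']] := dist_walk y z conn.
have := @dist_le _ e x (p ++ q); rewrite cat_path Hp Hl Hq last_cat Hl Hl' size_cat.
by rewrite Hs Hs'; apply.
Qed.

Lemma dist_edge (T : finType) (e : rel T) x y : e x y -> dist e x y <= 1.
Proof. by move=> H; have := @dist_le _ e x [:: y]; rewrite /= H; apply. Qed.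

Lemma dist_refl (T : finType) (e : rel T) x : dist e x x = 0.
Proof. by apply/eqP; rewrite -leqn0; have := @dist_le _ e x [::]; apply. Qed.

Lemma dist0 (T : finType) (e : rel T) x y :
  connected_graph e -> dist e x y = 0 -> x = y.
Proof.
move=> conn H; have [p [_ Hl Hs]] := dist_walk x y conn.
by rewrite H in Hs; case: p Hl Hs => [|? ?] //= <-.
Qed.

Definition isaut (T : finType) (e : rel T) (g : {perm T}) :=
  forall s t, e (g s) (g t) = e s t.

Lemma isautV (T : finType) (e : rel T) g : isaut e g -> isaut e g^-1.
Proof. by move=> H s t; rewrite -H !permKV. Qed.

Lemma dist_aut_le (T : finType) (e : rel T) g x y :
  connected_graph e -> isaut e g -> dist e (g x) (g y) <= dist e x y.
Proof.
move=> conn Hg; have [p [Hp Hl Hs]] := dist_walk x y conn.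
have := @dist_le _ e (g x) (map g p); rewrite last_map Hl size_map Hs; apply.
by rewrite path_map; rewrite (eq_path (e' := e)) // => s t; rewrite /= Hg.
Qed.

Lemma dist_aut (T : finType) (e : rel T) g x y :
  connected_graph e -> isaut e g -> dist e (g x) (g y) = dist e x y.
Proof.
move=> conn Hg; apply/eqP; rewrite eqn_leq dist_aut_le //=.
have := dist_aut_le (g x) (g y) conn (isautV Hg); by rewrite !permK.
Qed.


Definition vcomp (T : finType) (R : rel T) x := [set y | connect R x y].

Lemma erem_sym (T : finType) (e : rel T) E : symmetric e -> symmetric (erem e E).
Proof. by move=> sym u w; rewrite /erem sym setUC. Qed.

Lemma comp_eq (T : finType) (e : rel T) E t s : symmetric e ->
  connect (erem e E) t s -> vcomp (erem e E) t = vcomp (erem e E) s.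
Proof.
move=> sym H; apply/setP => z; rewrite !inE.
by rewrite (same_connect (sym_connect_sym (erem_sym E sym)) H).
Qed.

Lemma connect_map (T : finType) (R : rel T) (a : {perm T}) x y :
  (forall u w, R u w = R (a u) (a w)) -> connect R x y -> connect R (a x) (a y).
Proof.
move=> Ha /connectP[p Hp ->]; apply/connectP; exists (map a p); last by rewrite last_map.
by rewrite path_map (eq_path (e' := R)) // => u w; rewrite /= -Ha.
Qed.

Lemma class_data (T : finType) (e : rel T) P H : mirror_partition e P -> H \in P ->
  exists a : {perm T},
    [/\ isaut e a,
        (forall u w, [set u; w] \in H -> a u = w /\ a w = u),
        #|comps e H| = 2,
        (forall C, C \in comps e H -> (a @: C) \in comps e H /\ a @: C != C) &
        (forall u w, erem e H u w = erem e H (a u) (a w))].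
Proof. by move=> [_ HP] /HP. Qed.

Lemma no_conn (T : finType) (e : rel T) P H r s : symmetric e ->
  mirror_partition e P -> H \in P -> [set r; s] \in H -> ~~ connect (erem e H) r s.
Proof.
move=> sym mP HP Hrs; have [a [_ Hsw _ Hc _]] := class_data mP HP.
have Cin : vcomp (erem e H) r \in comps e H by apply: imset_f.
have [/imsetP[t _ Ht] Hne] := Hc _ Cin.
apply/negP => Hc'.
have : s \in a @: vcomp (erem e H) r.
  by rewrite -(Hsw _ _ Hrs).1; apply: imset_f; rewrite inE connect0.
rewrite Ht inE => Hts.
move: Hne; rewrite Ht -/(vcomp (erem e H) t) (comp_eq sym Hts) (comp_eq sym Hc').
by rewrite /vcomp eqxx.
Qed.

Lemma two_comps (T : finType) (e : rel T) P H r s : symmetric e ->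
  mirror_partition e P -> H \in P -> [set r; s] \in H ->
  forall x, connect (erem e H) r x || connect (erem e H) s x.
Proof.
move=> sym mP HP Hrs x; have [a [_ _ H2 _ _]] := class_data mP HP.
have nc := no_conn sym mP HP Hrs.
set C1 := vcomp (erem e H) r; set C2 := vcomp (erem e H) s.
have Hne : C1 != C2.
  apply/negP => /eqP E12; move: nc; have : s \in C2 by rewrite inE connect0.
  by rewrite -E12 inE => ->.
have Hsub : [set C1; C2] \subset comps e H.
  by apply/subsetP => C; rewrite in_set2 => /orP[]/eqP->; apply: imset_f.
have Heq : [set C1; C2] = comps e H.
  by apply/eqP; rewrite eqEcard Hsub H2 cards2 Hne.
have : vcomp (erem e H) x \in [set C1; C2] by rewrite Heq; apply: imset_f.
have Hx : x \in vcomp (erem e H) x by rewrite inE connect0.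
by rewrite in_set2 => /orP[]/eqP E; rewrite E inE in Hx; rewrite Hx ?orbT.
Qed.

Lemma comp_size (T : finType) (e : rel T) P H r s : symmetric e ->
  mirror_partition e P -> H \in P -> [set r; s] \in H ->
  forall x, #|vcomp (erem e H) x| * 2 = #|T|.
Proof.
move=> sym mP HP Hrs x; have [a [_ Hsw _ _ Her]] := class_data mP HP.
have [ar as_] := Hsw _ _ Hrs.
have le1 : forall u w, a u = w -> #|vcomp (erem e H) u| <= #|vcomp (erem e H) w|.
  move=> u w Hu; rewrite -(card_imset _ (@perm_inj _ a)); apply: subset_leq_card.
  apply/subsetP => y /imsetP[z]; rewrite !inE => Hz ->.
  by rewrite -Hu; apply: connect_map.
have Erc : #|vcomp (erem e H) r| = #|vcomp (erem e H) s|.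
  by apply/eqP; rewrite eqn_leq le1 // le1.
have nc := no_conn sym mP HP Hrs.
have tc := two_comps sym mP HP Hrs.
have Cs : vcomp (erem e H) s = ~: vcomp (erem e H) r.
  apply/setP => y; rewrite !inE; case Hry: (connect _ r y) => /=.
    apply/negP => Hsy; move: nc; rewrite (connect_trans Hry) //.
    by rewrite (sym_connect_sym (erem_sym H sym)).
  by have := tc y; rewrite Hry.
have Hrs2 : #|vcomp (erem e H) r| * 2 = #|T|.
  by rewrite -(cardsC (vcomp (erem e H) r)) -Cs -Erc muln2 -addnn.
have := tc x; case/orP => Hc.
  by rewrite -(comp_eq sym Hc).
by rewrite -(comp_eq sym Hc) -Erc.
Qed.

Lemma cross (T : finType) (e : rel T) E : connected_graph e ->
  forall p x, path e x p -> ~~ connect (erem e E) x (last x p) ->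
  exists t1 t2, [/\ [set t1; t2] \in E, e t1 t2 &
                    dist e x t1 + 1 + dist e t2 (last x p) <= size p].
Proof.
move=> conn; elim=> [|x1 p IH] x /=; first by rewrite connect0.
case/andP => Hx Hp Hnc.
case HE: ([set x; x1] \in E).
  exists x, x1; split => //; rewrite dist_refl add0n add1n ltnS.
  exact: dist_le.
have Hr : erem e E x x1 by rewrite /erem Hx HE.
have Hnc1 : ~~ connect (erem e E) x1 (last x1 p).
  apply: contra Hnc => Hc; apply: connect_trans Hc; exact: connect1.
have [t1 [t2 [H1 H2 H3]]] := IH x1 Hp Hnc1.
exists t1, t2; split => //.
have := dist_triangle x x1 t1 conn; have := dist_edge Hx.
move: H3; rewrite /=; lia.
Qed.

Lemma side (T : finType) (e : rel T) P H r s x : symmetric e -> connected_graph e ->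
  mirror_partition e P -> H \in P -> [set r; s] \in H ->
  connect (erem e H) r x -> dist e x r < dist e x s.
Proof.
move=> sym conn mP HP Hrs Hx; have [a [Ha Hsw _ _ _]] := class_data mP HP.
have [p [Hp Hl Hs]] := dist_walk x s conn.
have Hnc : ~~ connect (erem e H) x (last x p).
  rewrite Hl; apply: contra (no_conn sym mP HP Hrs) => Hc.
  exact: connect_trans Hx Hc.
have [t1 [t2 [H1 _ H3]]] := cross conn Hp Hnc.
rewrite Hl Hs in H3.
have [at1 at2] := Hsw _ _ H1; have [ar as_] := Hsw _ _ Hrs.
have : dist e t1 r = dist e t2 s by rewrite -at2 -as_ dist_aut.
move=> Ed; apply: leq_trans _ H3; rewrite addn1 ltnS -Ed.
exact: dist_triangle.
Qed.


Lemma edge_of_class (T : finType) (e : rel T) P H p q : simple_graph e ->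
  mirror_partition e P -> H \in P -> [set p; q] \in H -> e p q.
Proof.
move=> [sym irr] [/and3P[/eqP Hcov _ _] _] HP Hpq.
have : [set p; q] \in edges e by rewrite -Hcov; apply/bigcupP; exists H.
rewrite inE => /existsP[u /existsP[w /andP[Huw /eqP E]]].
have Hu : u \in [set p; q] by rewrite E in_set2 eqxx.
have Hw : w \in [set p; q] by rewrite E in_set2 eqxx orbT.
have Hp : p \in [set u; w] by rewrite -E in_set2 eqxx.
have Hq : q \in [set u; w] by rewrite -E in_set2 eqxx orbT.
move: Hu Hw Hp Hq; rewrite !in_set2.
case/orP=>/eqP Eu; case/orP=>/eqP Ew; subst => //; rewrite ?irr //.
all: try by rewrite irr in Huw.
all: by rewrite sym.
Qed.

Lemma class_of_edge (T : finType) (e : rel T) P u w :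
  mirror_partition e P -> e u w -> exists2 H, H \in P & [set u; w] \in H.
Proof.
move=> [/and3P[/eqP Hcov _ _] _] Huw.
have : [set u; w] \in edges e.
  by rewrite inE; apply/existsP; exists u; apply/existsP; exists w; rewrite Huw eqxx.
by rewrite -Hcov => /bigcupP[H HP Hin]; exists H.
Qed.

Lemma theta_class (T : finType) (e : rel T) P F p q u w : simple_graph e ->
  connected_graph e -> mirror_partition e P -> F \in P ->
  [set p; q] \in F -> [set u; w] \in F -> Theta e p q u w.
Proof.
move=> sg conn mP FP Hpq Huw; have [sym irr] := sg.
have Hwu : [set w; u] \in F by rewrite setUC.
rewrite /Theta (edge_of_class sg mP FP Hpq) (edge_of_class sg mP FP Huw) /=.
have ncpq := no_conn sym mP FP Hpq.
have csym := sym_connect_sym (erem_sym F sym).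
have euw := edge_of_class sg mP FP Huw.
have ewu : e w u by rewrite sym.
have t1 := dist_triangle p u w conn; have t2 := dist_triangle p w u conn.
have t3 := dist_triangle q u w conn; have t4 := dist_triangle q w u conn.
have d1 := dist_edge euw; have d2 := dist_edge ewu.
have := two_comps sym mP FP Huw p; case/orP => Hp.
- have s1 := side sym conn mP FP Huw Hp.
  have Hq : connect (erem e F) w q.
    have := two_comps sym mP FP Huw q; case/orP => // Hq.
    by move: ncpq; rewrite (connect_trans _ Hq) // csym.
  have s2 := side sym conn mP FP Hwu Hq.
  apply/eqP; lia.
- have s1 := side sym conn mP FP Hwu Hp.
  have Hq : connect (erem e F) u q.
    have := two_comps sym mP FP Huw q; case/orP => // Hq.
    by move: ncpq; rewrite (connect_trans _ Hq) // csym.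
  have s2 := side sym conn mP FP Huw Hq.
  apply/eqP; lia.
Qed.

Definition swapE (T : finType) (E : {set {set T}}) (a : {perm T}) :=
  forall t1 t2, [set t1; t2] \in E -> a t1 = t2 /\ a t2 = t1.

Lemma erem_pres (T : finType) (e : rel T) E a : isaut e a -> swapE E a ->
  forall s t, erem e E s t -> erem e E (a s) (a t).
Proof.
move=> Ha Hsw s t /andP[Hst HnE]; rewrite /erem Ha Hst /=.
apply/negP => Hin; have [h1 h2] := Hsw _ _ Hin.
have E1 : a s = t by apply: (@perm_inj _ a).
have E2 : a t = s by apply: (@perm_inj _ a).
by move: Hin HnE; rewrite E1 E2 setUC => ->.
Qed.

Lemma connect_pres (T : finType) (e : rel T) E a : isaut e a -> swapE E a ->
  forall s t, connect (erem e E) s t -> connect (erem e E) (a s) (a t).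
Proof.
move=> Ha Hsw s t /connectP[p Hp ->]; apply/connectP; exists (map a p).
  by apply: homo_path Hp => u v; apply: erem_pres.
by rewrite last_map.
Qed.

Lemma profile (T : finType) (e : rel T) E a b z y : connected_graph e ->
  isaut e a -> isaut e b -> swapE E a -> swapE E b ->
  ~~ connect (erem e E) (b z) y -> dist e (a z) y <= dist e (b z) y.
Proof.
move=> conn Ha Hb Sa Sb Hnc.
have [p [Hp Hl Hs]] := dist_walk (b z) y conn.
rewrite -Hl in Hnc; have [t1 [t2 [H1 He H3]]] := cross conn Hp Hnc.
rewrite Hl Hs in H3.
have [bt1 bt2] := Sb _ _ H1; have [at1 at2] := Sa _ _ H1.
have E1 : dist e (b z) t1 = dist e z t2 by rewrite -bt2 dist_aut.
have E2 : dist e (a z) t1 = dist e z t2 by rewrite -at2 dist_aut.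
have := dist_triangle (a z) t1 y conn; have := dist_triangle t1 t2 y conn.
have := dist_edge He; lia.
Qed.


Lemma core2 (T : finType) (e : rel T) P F (a b : {perm T}) c c' z1 z :
  simple_graph e -> connected_graph e -> mirror_partition e P -> F \in P ->
  [set c; c'] \in F -> isaut e a -> isaut e b -> swapE F a -> swapE F b ->
  e z1 z -> [set z1; z] \notin F -> a z1 = b z1 ->
  connect (erem e F) c (a z) -> connect (erem e F) c (b z) ->
  connect (erem e F) c (a z1) -> a z = b z.
Proof.
move=> sg conn mP FP Hcc Ha Hb Sa Sb Hz Hnf Hz1 Cza Czb Cz1.
have [sym irr] := sg.
have csymF := sym_connect_sym (erem_sym F sym).
set w1 := a z1; set wa := a z; set wb := b z.
have ew1a : e w1 wa by rewrite /w1 /wa Ha.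
have ew1b : e w1 wb by rewrite /w1 Hz1 /wb Hb.
have Hnf' : [set w1; wa] \notin F.
  have Her : erem e F z1 z by rewrite /erem Hz Hnf.
  by have /andP[] := erem_pres Ha Sa Her.
have [H HP Hin] := class_of_edge mP ew1a.
have [aH [HaH SwH _ _ _]] := class_data mP HP.
case Hb1: ([set w1; wb] \in H).
  by rewrite -(SwH _ _ Hin).1 -(SwH _ _ Hb1).1.
have csymH := sym_connect_sym (erem_sym H sym).
have ncc := no_conn sym mP FP Hcc.
have prof : forall y, connect (erem e F) c' y -> dist e wa y = dist e wb y.
  move=> y Hy; apply/eqP; rewrite eqn_leq; apply/andP; split.
    apply: profile conn Ha Hb Sa Sb _; apply/negP => Hc.
    by move: ncc; rewrite (connect_trans Czb (connect_trans Hc _)) // csymF.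
  apply: profile conn Hb Ha Sb Sa _; apply/negP => Hc.
  by move: ncc; rewrite (connect_trans Cza (connect_trans Hc _)) // csymF.
have final : forall r' s', [set r'; s'] \in H -> connect (erem e F) c' r' ->
    connect (erem e F) c' s' -> connect (erem e H) r' w1 -> False.
  move=> r' s' Hrs Cr Cs Cw1.
  have Hsr : [set s'; r'] \in H by rewrite setUC.
  have Cwb : connect (erem e H) r' wb.
    apply: connect_trans Cw1 (connect1 _); by rewrite /erem ew1b Hb1.
  have sb := side sym conn mP HP Hrs Cwb.
  have Cwa : connect (erem e H) s' wa.
    have := two_comps sym mP HP Hrs wa; case/orP => // Cra.
    have := no_conn sym mP HP Hin; rewrite (connect_trans _ Cra) // csymH //.
  have sa := side sym conn mP HP Hsr Cwa.
  rewrite (prof _ Cr) (prof _ Cs) in sa.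
  by have := ltn_trans sa sb; rewrite ltnn.
case/boolP: [exists r', exists s', ([set r'; s'] \in H) &&
    connect (erem e F) c' r' && connect (erem e F) c' s'].
  case/existsP => r' /existsP[s' /andP[/andP[Hrs Cr] Cs]].
  have := two_comps sym mP HP Hrs w1; case/orP => Cw.
    by case: (final _ _ Hrs Cr Cs Cw).
  by case: (final s' r' _ Cs Cr Cw); rewrite setUC.
move=> Hno; exfalso.
have noH : forall r' s', [set r'; s'] \in H -> connect (erem e F) c' r' ->
    connect (erem e F) c' s' -> False.
  move=> r' s' H1 H2 H3; move/negP: Hno; apply; apply/existsP; exists r'.
  by apply/existsP; exists s'; rewrite H1 H2 H3.
have sub : forall p x, path (erem e F) x p -> connect (erem e F) c' x ->
    connect (erem e H) c' x -> connect (erem e H) c' (last x p).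
  elim=> [|x1 p IH] x //= /andP[Hx Hp] CF CH.
  have CF1 : connect (erem e F) c' x1 by apply: connect_trans CF (connect1 Hx).
  apply: IH => //; apply: connect_trans CH (connect1 _).
  move: Hx; rewrite /erem => /andP[-> _] /=; apply/negP => Hin'.
  exact: noH Hin' CF CF1.
have EQ : vcomp (erem e F) c' = vcomp (erem e H) c'.
  apply/eqP; rewrite eqEcard; apply/andP; split.
    apply/subsetP => y; rewrite !inE => /connectP[p Hp ->].
    by apply: sub => //; rewrite connect0.
  have h1 := comp_size sym mP FP Hcc c'; have h2 := comp_size sym mP HP Hin c'.
  suff -> : #|vcomp (erem e H) c'| = #|vcomp (erem e F) c'| by [].
  by apply/eqP; rewrite -(eqn_pmul2r (_ : 0 < 2)) // h1 h2.
have N1 : w1 \notin vcomp (erem e H) c'.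
  rewrite -EQ inE; apply/negP => C; move: ncc.
  by rewrite (connect_trans Cz1 (_ : connect _ w1 c')) // csymF.
have N2 : wa \notin vcomp (erem e H) c'.
  rewrite -EQ inE; apply/negP => C; move: ncc.
  by rewrite (connect_trans Cza (_ : connect _ wa c')) // csymF.
have := two_comps sym mP HP Hin c'; rewrite (csymH w1) (csymH wa).
by rewrite !inE in N1 N2; rewrite (negbTE N1) (negbTE N2).
Qed.

Lemma mirror_props (T : finType) (e : rel T) u w a : mirror_aut_of e u w a ->
  isaut e a /\ (forall p q, Theta e p q u w -> a p = q /\ a q = p).
Proof.
move=> /andP[/forallP H1 /forallP H2]; split.
  by move=> s t; apply/eqP; have /forallP := H2 s; apply.
move=> p q Th; have /forallP := H1 p; move/(_ q); rewrite Th /=.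
by case/andP => /eqP -> /eqP ->.
Qed.

Lemma mirror_uniq (T : finType) (e : rel T) u w a b : mirror_graph e -> e u w ->
  mirror_aut_of e u w a -> mirror_aut_of e u w b -> a = b.
Proof.
case=> sg conn [P mP] Huw Ma Mb; have [sym irr] := sg.
have csym := sym_connect_sym (erem_sym _ sym).
have [F FP HF] := class_of_edge mP Huw.
have HF' : [set w; u] \in F by rewrite setUC.
have [Ha Ta] := mirror_props Ma; have [Hb Tb] := mirror_props Mb.
have Sa : swapE F a by move=> t1 t2 Ht; apply: Ta; exact: (theta_class sg conn mP FP Ht HF).
have Sb : swapE F b by move=> t1 t2 Ht; apply: Tb; exact: (theta_class sg conn mP FP Ht HF).
have step : forall x x1, e x x1 -> a x = b x -> a x1 = b x1.
  move=> x x1 Hx Hab.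
  case HF1: ([set x; x1] \in F).
    by rewrite (Sa _ _ HF1).2 (Sb _ _ HF1).2.
  have Cxx1 : connect (erem e F) x x1 by apply: connect1; rewrite /erem Hx HF1.
  have := two_comps sym mP FP HF x1; case/orP => C.
  - have Cx : connect (erem e F) u x by rewrite (connect_trans C) // csym.
    apply: (core2 sg conn mP FP HF' Ha Hb Sa Sb Hx (negbT HF1) Hab).
    + by rewrite -(Sa _ _ HF).1; apply: connect_pres.
    + by rewrite -(Sb _ _ HF).1; apply: connect_pres.
    + by rewrite -(Sa _ _ HF).1; apply: connect_pres.
  - have Cx : connect (erem e F) w x by rewrite (connect_trans C) // csym.
    apply: (core2 sg conn mP FP HF Ha Hb Sa Sb Hx (negbT HF1) Hab).
    + by rewrite -(Sa _ _ HF).2; apply: connect_pres.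
    + by rewrite -(Sb _ _ HF).2; apply: connect_pres.
    + by rewrite -(Sa _ _ HF).2; apply: connect_pres.
have gen : forall p x, path e x p -> a x = b x -> a (last x p) = b (last x p).
  elim=> [|x1 p IH] x //= /andP[Hx Hp] Hab; apply: IH => //; exact: step Hab.
apply/permP => z; have /connectP[p Hp ->] := conn u z.
by apply: gen => //; rewrite (Sa _ _ HF).1 (Sb _ _ HF).1.
Qed.

Local Open Scope group_scope.

Lemma theta_aut (T : finType) (e : rel T) g p q u w : connected_graph e -> isaut e g ->
  Theta e (g p) (g q) (g u) (g w) = Theta e p q u w.
Proof. by move=> conn Hg; rewrite /Theta !Hg !dist_aut. Qed.

Lemma mirror_conj (T : finType) (e : rel T) g u w be : connected_graph e -> isaut e g ->
  mirror_aut_of e u w be -> mirror_aut_of e (g u) (g w) (g^-1 * be * g)%g.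
Proof.
move=> conn Hg Mb; have [Hb Tb] := mirror_props Mb.
apply/andP; split; apply/forallP => p; apply/forallP => q.
  apply/implyP => Th; rewrite !permM.
  have Th' : Theta e (g^-1 p) (g^-1 q) u w.
    by rewrite -(theta_aut _ _ _ _ conn Hg) !permKV.
  have [-> ->] := Tb _ _ Th'; by rewrite !permKV !eqxx.
by rewrite !permM Hg Hb (isautV Hg).
Qed.

Lemma alpha_conj (T : finType) (e : rel T) g u w : mirror_graph e -> e u w -> isaut e g ->
  alpha e (g u) (g w) = (g^-1 * alpha e u w * g)%g.
Proof.
move=> mg Huw Hg; have [_ conn _] := mg; rewrite /alpha.
case: (pickP (mirror_aut_of e (g u) (g w))) => [c Mc|N1];
  case: (pickP (mirror_aut_of e u w)) => [be Mb|N2] /=.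
- apply: (mirror_uniq mg _ Mc (mirror_conj conn Hg Mb)); by rewrite Hg.
- have := mirror_conj conn (isautV Hg) Mc; rewrite !permK => M.
  by rewrite N2 in M.
- by move: (mirror_conj conn Hg Mb); rewrite N1.
- by rewrite mulg1 mulVg.
Qed.

Lemma alpha_inv (T : finType) (e : rel T) u w : mirror_graph e -> e u w ->
  (alpha e u w * alpha e u w = 1)%g.
Proof.
move=> mg Huw; rewrite /alpha.
case: (pickP (mirror_aut_of e u w)) => [be Mb|_] /=; last by rewrite mulg1.
have [Hb Tb] := mirror_props Mb.
have Mi : mirror_aut_of e u w be^-1.
  apply/andP; split; apply/forallP => p; apply/forallP => q.
    apply/implyP => Th; have [E1 E2] := Tb _ _ Th.
    have h1 : be^-1 p = q by rewrite -E2 permK.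
    have h2 : be^-1 q = p by rewrite -E1 permK.
    by rewrite h1 h2 !eqxx.
  by rewrite (isautV Hb).
by rewrite {2}(mirror_uniq mg Huw Mb Mi) mulgV.
Qed.

Lemma alpha_sym (T : finType) (e : rel T) u w : symmetric e ->
  alpha e u w = alpha e w u.
Proof.
move=> sym; rewrite /alpha; congr odflt; apply: eq_pick => a.
rewrite /mirror_aut_of; congr (_ && _).
apply: eq_forallb => p; apply: eq_forallb => q.
suff -> : Theta e p q u w = Theta e p q w u by [].
by rewrite /Theta (sym u w) eq_sym.
Qed.

Lemma main_ind (T : finType) (e : rel T) x y a0 : mirror_graph e -> e x y ->
  mirror_aut_of e x y a0 -> alpha e x y = a0 ->
  forall pth v, path e v pth -> last v pth = x ->
  exists p : seq T,
    [/\ path e v p, last v p = a0 v &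
        a0 = (\prod_(a <- pairmap (alpha e) v p) a)%g].
Proof.
move=> mg Hxy Ma Ea; have [sg conn [P mP]] := mg; have [sym irr] := sg.
have [Ha Ta] := mirror_props Ma.
elim=> [|u1 pth IH] v /=.
  move=> _ ->; exists [:: y]; split => /=.
  - by rewrite Hxy.
  - have [F FP HF] := class_of_edge mP Hxy.
    by rewrite (Ta _ _ (theta_class sg conn mP FP HF HF)).1.
  - by rewrite big_cons big_nil mulg1 Ea.
case/andP => Hv Hp Hl; have [p [Hp' Hl' Hpr]] := IH u1 Hp Hl.
exists (u1 :: rcons p (a0 v)); split.
- by rewrite /= Hv rcons_path Hp' Hl' Ha sym.
- by rewrite /= last_rcons.
- rewrite /= -cats1 pairmap_cat big_cons big_cat big_seq1 /= -Hpr Hl'.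
  rewrite (alpha_conj mg _ Ha) ?(sym u1) // (@alpha_sym _ _ u1 v sym).
  by rewrite !mulgA mulgK alpha_inv // mul1g.
Qed.

Theorem lemma5 (T : finType) (e : rel T) (x y v : T) :
  mirror_graph e -> e x y ->
  exists p : seq T,
    [/\ path e v p,
        last v p = alpha e x y v &
        alpha e x y = (\prod_(a <- pairmap (alpha e) v p) a)%g].
Proof.
move=> mg Hxy; have [_ conn _] := mg.
case: (pickP (mirror_aut_of e x y)) => [a0 Ma|N].
  have Ea : alpha e x y = a0 by rewrite /alpha; case: pickP => [c Mc|N]; 
    [ rewrite /= (mirror_uniq mg Hxy Mc Ma) | rewrite N in Ma].
  have /connectP[pth Hp Hl] := conn v x.
  by rewrite Ea; apply: (main_ind mg Hxy Ma Ea Hp); rewrite -Hl.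
have Ea : alpha e x y = 1%g by rewrite /alpha; case: pickP => [c Mc|//]; rewrite N in Mc.
exists [::]; split => //=; first by rewrite Ea perm1.
by rewrite Ea big_nil.
Qed.
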